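(* Let $\mathcal F=(F,\rightarrowtail)$ be a finite argumentation framework. If $A\subseteq F$ is statically tenable, then $A$ is contained in some weakly complete extension of $\mathcal F$.
   Context: An argumentation framework $\mathcal F=(F,\rightarrowtail)$ consists of a set $F$ of arguments and an attack relation $\rightarrowtail\subseteq F\times F$. An argument $a$ attacks a set $B$ if $a\rightarrowtail b$ for some $b\in B$. $A^+=\{x\in F:\exists a\in A,\ a\rightarrowtail x\}$. A set is conflict-free if none of its elements attacks one of its elements. $A\succeq B$ ($A$ is as cogent as $B$) means $A$ is conflict-free and every $b\in B$ that attacks $A$ belongs to $A^+$. $A\subseteq F$ is statically tenable if for every finite conflict-free $B\subseteq F$ there is a conflict-free $C\supseteq A$ with $C\succeq B$. A weakly complete labeling is a map $L:F\to\{\mathtt{in},\mathtt{out},\mathtt{undec}\}$ such that for every $a\in F$: if $L(a)=\mathtt{in}$ then no attacker of $a$ is labeled $\mathtt{in}$; if $L(a)=\mathtt{out}$ then some attacker of $a$ is labeled $\mathtt{in}$; if $L(a)=\mathtt{undec}$ then some attacker of $a$ is labeled $\mathtt{undec}$ and no attacker of $a$ is labeled $\mathtt{in}$. A set is a weakly complete extension if it equals $\{a:L(a)=\mathtt{in}\}$ for some weakly complete labeling $L$. *)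

(* Defs.v *)
From mathcomp Require Import all_boot.
Set Implicit Arguments. Unset Strict Implicit. Unset Printing Implicit Defensive.

(* Finite argumentation framework: arguments = finType T, attack relation att : rel T,
   where  att a b  means  a attacks b. *)

Section AF.
Variables (T : finType) (att : rel T).

Definition attacks_set (a : T) (B : {set T}) : bool := [exists b in B, att a b].

Definition plus (A : {set T}) : {set T} := [set x | [exists a in A, att a x]].

Definition conflict_free (A : {set T}) : bool :=
  [forall a in A, forall b in A, ~~ att a b].

Definition cogent (A B : {set T}) : bool :=
  conflict_free A && [forall b in B, attacks_set b A ==> (b \in plus A)].

(* statically tenable (every subset of a finite F is finite) *)
Definition statically_tenable (A : {set T}) : Prop :=
  forall B : {set T}, conflict_free B ->
    exists C : {set T}, [/\ conflict_free C, A \subset C & cogent C B].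

Inductive label := lab_in | lab_out | lab_undec.

Definition is_in (l : label) : bool := if l is lab_in then true else false.

Definition weakly_complete_labeling (L : T -> label) : Prop :=
  forall a : T,
    (L a = lab_in -> forall b, att b a -> L b <> lab_in) /\
    (L a = lab_out -> exists b, att b a /\ L b = lab_in) /\
    (L a = lab_undec -> (exists b, att b a /\ L b = lab_undec) /\
                        (forall b, att b a -> L b <> lab_in)).

Definition weakly_complete_extension (E : {set T}) : Prop :=
  exists L : T -> label, weakly_complete_labeling L /\ E = [set a | is_in (L a)].

End AF.

(* Main.v *)
Require Import Defs.
From mathcomp Require Import all_boot.
From mathcomp Require Import zify.

Section Proofs.
Variables (T : finType) (att : rel T).

Lemma plusP (E : {set T}) x :
  reflect (exists2 a, a \in E & att a x) (x \in plus att E).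
Proof. rewrite inE; exact: exists_inP. Qed.

Lemma plus_mono (E F : {set T}) x : E \subset F -> x \in plus att E -> x \in plus att F.
Proof.
move=> sEF /plusP [a aE hax]; apply/plusP; exists a => //; exact: (subsetP sEF).
Qed.

Lemma cfP (E : {set T}) :
  reflect (forall a b, a \in E -> b \in E -> ~~ att a b) (conflict_free att E).
Proof.
apply: (iffP forall_inP) => [h a b aE bE | h a aE].
  by move/forall_inP: (h a aE) => /(_ b bE).
by apply/forall_inP => b bE; apply: h.
Qed.

Lemma extend (E : {set T}) a :
  statically_tenable att E -> a \notin E -> a \notin plus att E ->
  (forall b, att b a -> b \in plus att E) -> statically_tenable att (a |: E).
Proof.
move=> tE aE aP hatt B cfB.
have naa : ~~ att a a by apply/negP => /hatt; rewrite (negbTE aP).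
set B' := a |: [set b in B | ~~ att b a && ~~ att a b].
have cfB' : conflict_free att B'.
  apply/cfP => x y; rewrite !inE => /orP[/eqP->|/andP[xB /andP[xa ax]]]
    /orP[/eqP->|/andP[yB /andP[ya ay]]] //.
  by move/cfP: cfB; apply.
have [C [cfC EC /andP[_ cogC]]] := tE B' cfB'.
have noCa : forall c, c \in C -> ~~ att c a.
  move=> c cC; apply/negP => /hatt /plusP [e eE hec].
  by move/cfP: cfC => /(_ e c (subsetP EC e eE) cC); rewrite hec.
have aC : forall c, c \in C -> ~~ att a c.
  move=> c cC; apply/negP => hac.
  have : attacks_set att a C by apply/exists_inP; exists c.
  move/forall_inP: cogC => /(_ a (setU11 _ _)) /implyP h /h /plusP [c' c'C].
  by rewrite (negbTE (noCa c' c'C)).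
have cfaC : conflict_free att (a |: C).
  apply/cfP => x y; rewrite !inE => /orP[/eqP->|xC] /orP[/eqP->|yC] //.
  - exact: aC.
  - exact: noCa.
  - by move/cfP: cfC; apply.
exists (a |: C); split => //; first exact: setUS.
apply/andP; split => //; apply/forall_inP => b bB; apply/implyP.
move=> /exists_inP [x xaC hbx].
case hba: (att b a).
  by apply: (@plus_mono _ _ b (subset_trans EC (subsetUr [set a] C))); exact: hatt.
case hab: (att a b).
  by apply/plusP; exists a => //; exact: setU11.
have bB' : b \in B' by rewrite !inE bB hba hab orbT.
case/setU1P: xaC => [xa|xC]; first by move: hba hbx; rewrite xa => ->.
apply: (@plus_mono _ _ b (subsetUr [set a] C)).
have : attacks_set att b C by apply/exists_inP; exists x.
by move/forall_inP: cogC => /(_ b bB') /implyP.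
Qed.

Definition labOf (E : {set T}) (x : T) : label :=
  if x \in E then lab_in else if x \in plus att E then lab_out else lab_undec.

Lemma wc_of (E : {set T}) : conflict_free att E ->
  [forall x, ((x \notin E) && (x \notin plus att E)) ==>
   [exists b, [&& att b x, b \notin E & b \notin plus att E]]] ->
  weakly_complete_extension att E.
Proof.
move=> cfE hall; exists (labOf E); split; last first.
  by apply/setP => x; rewrite inE /labOf; case: (x \in E); case: (x \in plus att E).
move=> x; rewrite /labOf; split; [|split].
case: (boolP (x \in E)) => xE; last by case: ifP.
  move=> _ b hbx; case: (boolP (b \in E)) => bE; last by case: ifP.
  by move/cfP: cfE => /(_ b x bE xE); rewrite hbx.
case: (boolP (x \in E)) => xE; first by case.
  case: (boolP (x \in plus att E)) => xP; last by case.
  move=> _; case/plusP: xP => b bE hbx; exists b; by rewrite bE.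
case: (boolP (x \in E)) => xE; first by case.
case: (boolP (x \in plus att E)) => xP; first by case.
move=> _; split.
  move/forallP: hall => /(_ x) /implyP; rewrite xE xP => /(_ isT) /existsP [b /and3P [hbx bE bP]].
  by exists b; split => //; rewrite (negbTE bE) (negbTE bP).
move=> b hbx; case: ifP => [bE|_]; last by case: ifP.
case: (negP xP); apply/plusP; by exists b.
Qed.

Lemma main_ind n (A E : {set T}) :
  statically_tenable att E -> A \subset E -> #|T| - #|E| <= n ->
  exists E' : {set T}, weakly_complete_extension att E' /\ A \subset E'.
Proof.
elim: n E => [|n IH] E tE AE hn;
case: (boolP [forall x, ((x \notin E) && (x \notin plus att E)) ==>
   [exists b, [&& att b x, b \notin E & b \notin plus att E]]]) => hall.
1,3: exists E; split => //; apply: wc_of => //;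
     have cf0 : conflict_free att set0 by apply/cfP => ? ?; rewrite inE.
1,2: have [C [cfC EC _]] := tE set0 cf0;
       apply/cfP => x y xE yE; move/cfP: cfC; apply; exact: (subsetP EC).
all: move/forallPn: hall => [a]; rewrite negb_imply => /andP [/andP [aE aP] nex].
all: have hatt : forall b, att b a -> b \in plus att E by
       move=> b hba; case bP: (b \in plus att E) => //; case: (boolP (b \in E)) => bE;
       [ case: (negP aP); apply/plusP; by exists b
       | case: (negP nex); apply/existsP; exists b; by rewrite hba bE bP ].
all: have ltE : #|E| < #|a |: E| by rewrite cardsU1 aE.
- have : #|a |: E| <= #|T| by exact: max_card.
  move: hn; rewrite leqn0 subn_eq0 => hn h; by move: (leq_trans (leq_trans ltE h) hn); rewrite ltnn.
- apply: (IH (a |: E)); first exact: extend.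
  + exact: subset_trans AE (subsetUr _ _).
  + have h2 : #|a |: E| <= #|T| by exact: max_card.
    move: hn ltE h2; move: #|T| #|E| #|a |: E| => t e e' h1 h2 h3.
    lia.
Qed.

End Proofs.

Theorem mainTheorem14 (T : finType) (att : rel T) (A : {set T}) :
  statically_tenable att A ->
  exists E : {set T}, weakly_complete_extension att E /\ A \subset E.
Proof.
move=> tA; apply: (@main_ind T att #|T| A A) => //.
exact: leq_subr.
Qed.
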